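(* Let $a\geq 3$ be an integer. For $m\geq 1$, the number $A_m$ of right $0$-pyramids of pieces of length $a$ and of size $m$ is $$A_m=\frac{1}{(a-1)m+1}\binom{am}{m}=\frac{(am)!}{m!\,((a-1)m+1)!}.$$
   Context: A piece is an open interval $]s,s+a[$ with $s\in\mathbb Z$; two pieces are concurrent iff their intervals intersect. A heap is a finite configuration obtained by successively dropping pieces vertically towards the horizontal axis, each coming to rest on the axis or on top of the highest previously placed piece whose interval meets its own; configurations (not dropping orders) are counted. A pyramid is a heap with a unique bottom piece (exactly one piece on the axis); its size is its number of pieces. A right $0$-pyramid is a pyramid whose bottom piece covers $]0,a[$ and is a leftmost piece (no piece covers $]t,t+a[$ with $t<0$). *)

(* Defs.v *)
From HB Require Import structures.
From mathcomp Require Import all_boot all_order all_algebra.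
From mathcomp Require Import finmap.
Set Implicit Arguments. Unset Strict Implicit. Unset Printing Implicit Defensive.
Import Order.TTheory GRing.Theory Num.Theory.
Local Open Scope fset_scope.

(* A placed piece is a pair (s, h): the open interval ]s, s+a[ (s : int)
   resting at level h (h = 0 means lying on the horizontal axis). *)
Definition placed := (int * nat)%type.

(* Pieces ]s,s+a[ and ]t,t+a[ are concurrent iff the intervals meet,
   i.e. |s - t| < a. *)
Definition concurrent (a : nat) (s t : int) : bool := (`|s - t| < a)%N.

Definition drop_level (a : nat) (C : {fset placed}) (s : int) : nat :=
  \max_(p <- C | concurrent a p.1 s) p.2.+1.

Inductive heap (a : nat) : {fset placed} -> Prop :=
  | heap_empty : heap a fset0
  | heap_drop C s : heap a C -> heap a ((s, drop_level a C s) |` C).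

Definition pyramid (a : nat) (C : {fset placed}) : Prop :=
  heap a C /\ #|` [fset p in C | p.2 == 0%N]| = 1%N.

Definition right0_pyramid (a : nat) (C : {fset placed}) : Prop :=
  pyramid a C /\ ((0%Z, 0%N) \in C) /\ (forall p, p \in C -> (0 <= p.1)%R).

(* Main.v *)
Require Import Defs.
From HB Require Import structures.
From mathcomp Require Import all_boot all_order all_algebra.
From mathcomp Require Import finmap.
From mathcomp Require Import zify ring.
Set Implicit Arguments. Unset Strict Implicit. Unset Printing Implicit Defensive.
Import Order.TTheory GRing.Theory Num.Theory.
(* Proof sketch: right 0-pyramids of size m are in bijection
   (via their "canonical" drop sequences) with integer sequences
   s_1 = 0, 0 <= s_(k+1) <= s_k + a - 1, which are in bijection with
   compositions counted by the cycle lemma. *)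

Fixpoint wcomp (k S : nat) : seq (seq nat) :=
  match k with
  | 0 => if S == 0 then [:: [::]] else [::]
  | k'.+1 => [seq (S - j) :: t | j <- iota 0 S.+1, t <- wcomp k' j]
  end.

Lemma wcompS k S : wcomp k.+1 S = [seq (S - j) :: t | j <- iota 0 S.+1, t <- wcomp k j].
Proof. by []. Qed.

Lemma mem_wcomp k S t : (t \in wcomp k S) = (size t == k) && (sumn t == S).
Proof.
elim: k S t => [|k IH] S t.
  case: t => [|x t] /=; case: S => [|S] //=; rewrite ?inE //.
rewrite wcompS; apply/allpairsPdep/idP.
  case=> j [u [hj hu ->]] /=; rewrite IH in hu; case/andP: hu => /eqP -> /eqP ->.
  rewrite mem_iota in hj; rewrite eqxx /=; apply/eqP; lia.
case: t => [|x t]; first by [].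
move=> /andP[/eqP hs /eqP hS]; move: hs => /= [hs]; move: hS => /= hS.
exists (sumn t); exists t; split.
- suff : sumn t \in iota 0 S.+1 by []. rewrite mem_iota; lia.
- by rewrite IH hs !eqxx.
- rewrite /=; congr (_ :: _); lia.
Qed.

Lemma uniq_pairs (s : seq nat) (t : nat -> seq (seq nat)) (g : nat -> nat) :
  uniq s -> {in s &, injective g} -> (forall x, uniq (t x)) ->
  uniq [seq g x :: y | x <- s, y <- t x].
Proof.
elim: s => [|x s IH] //= /andP[xs us] ig ut.
rewrite cat_uniq map_inj_uniq ?ut; last by move=> ? ? [].
rewrite IH //; last by move=> u v hu hv; apply: ig; rewrite inE ?hu ?hv orbT.
rewrite andbT; apply/hasPn => z /allpairsPdep [x' [y' [hx' hy' ->]]].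
apply/mapP => [[y hy [e1 _]]].
have : x' = x by apply: ig; rewrite ?inE ?hx' ?eqxx ?orbT.
by move=> ex; move: xs; rewrite -ex hx'.
Qed.

Lemma uniq_wcomp k S : uniq (wcomp k S).
Proof.
elim: k S => [|k IH] S; first by case: S.
rewrite wcompS; apply: uniq_pairs => //; first exact: iota_uniq.
move=> u v; rewrite !mem_iota => hu hv e; lia.
Qed.

Lemma hockey k S : sumn [seq 'C(j + k - 1, j) | j <- iota 0 S.+1] = 'C(S + k, S).
Proof.
elim: S => [|S IH]; first by rewrite /= !bin0.
rewrite -[S.+2]addn1 iotaD map_cat sumn_cat IH /= add0n addn0.
have -> : S.+1 + k - 1 = S + k by lia.
by rewrite addSn binS addnC.
Qed.

Lemma size_wcomp k S : size (wcomp k S) = 'C(S + k - 1, S).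
Proof.
elim: k S => [|k IH] S.
  case: S => [|S] //=; rewrite addn0 subn1 /= bin_small //.
rewrite wcompS size_allpairs_dep.
rewrite (eq_map (fun j => IH j)) hockey; congr 'C(_, _); lia.
Qed.

Definition Q (c : seq nat) j := sumn (take j c).
Definition good (b : nat) (c : seq nat) :=
  all (fun j => Q c j <= b * j) (iota 0 (size c)).

Lemma Q_le c j : Q c j <= sumn c.
Proof. by rewrite /Q -{2}(cat_take_drop j c) sumn_cat leq_addr. Qed.

Lemma sumn_drop c j : sumn (drop j c) = sumn c - Q c j.
Proof. by rewrite /Q -{2}(cat_take_drop j c) sumn_cat addKn. Qed.

Lemma Q_add c i k : Q c (i + k) = Q c i + sumn (take k (drop i c)).
Proof. by rewrite /Q takeD sumn_cat. Qed.

Lemma no_two b d k : good b d -> 0 < k < size d -> sumn d = b * size d + 1 ->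
  ~~ good b (rot k d).
Proof.
move=> gd /andP[k0 km] sd; apply/negP => /allP H.
have := H (size d - k); rewrite size_rot mem_iota add0n.
have -> : size d - k < size d by lia.
move=> /(_ isT).
rewrite /Q /rot take_cat size_drop ltnn subnn take0 cats0 sumn_drop.
have := allP gd k; rewrite mem_iota add0n km => /(_ isT) hk.
have hQ := Q_le d k.
rewrite mulnBr; nia.
Qed.

Lemma rot_unique b c i j : sumn c = b * size c + 1 -> i < size c -> j < size c ->
  good b (rot i c) -> good b (rot j c) -> i = j.
Proof.
move=> sc.
wlog lij : i j / i <= j.
  move=> H hi hj gi gj; case: (leqP i j) => h; first exact: H.
  by apply/esym/H => //; apply: ltnW.
move=> hi hj gi gj; have [h|h|//] := ltngtP i j; last by lia.
have e : rot j c = rot (j - i) (rot i c) by rewrite -rotD ?subnK //; lia.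
have hn := no_two (k := j - i) gi; rewrite size_rot sumn_rot -e gj in hn.
have /hn : 0 < j - i < size c by lia.
by move=> /(_ sc).
Qed.

Lemma first_argmin (F : nat -> nat) m : 0 < m ->
  exists i, [/\ i < m, forall k, k < m -> F i <= F k & forall k, k < i -> F i < F k].
Proof.
case: m => // m _; elim: m => [|m [i [hi h1 h2]]].
  by exists 0; split => // k; rewrite ltnS leqn0 => /eqP ->.
case: (ltnP (F m.+1) (F i)) => hF.
  exists m.+1; split => // k hk.
    case: (ltnP k m.+1) => hk'; first by apply: ltnW; apply: leq_trans (h1 _ hk').
    by have -> : k = m.+1 by lia.
  exact: leq_trans hF (h1 _ hk).
exists i; split => //; first lia.
move=> k hk; case: (ltnP k m.+1) => hk'; first exact: h1.
by have -> : k = m.+1 by lia.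
Qed.

Lemma rot_exists b c : sumn c = b * size c + 1 -> 0 < size c ->
  exists2 i, i < size c & good b (rot i c).
Proof.
move=> sc m0; set m := size c in sc m0 *.
set S := sumn c.
have [i [hi h1 h2]] := first_argmin (fun j => b * j + S - Q c j) m0.
exists i => //.
apply/allP => k; rewrite size_rot mem_iota add0n => hk.
rewrite /Q /rot take_cat size_drop.
have hQ j : Q c j <= S by exact: Q_le.
case: ifP => hki.
  have := Q_add c i k; rewrite /Q => hadd.
  have hik : i + k < m by lia.
  have := h1 _ hik; have := hQ (i + k); have := hQ i.
  rewrite /Q hadd mulnDr; lia.
rewrite sumn_cat take_takel; last lia.
rewrite sumn_drop.
set j := k - (m - i).
have hj : j < i by rewrite /j; lia.
have := h2 _ hj; have := hQ j; have := hQ i; rewrite /Q.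
have : b * k = b * (m - i) + b * j by rewrite -mulnDr /j; congr (_ * _); lia.
have : b * m = b * (m - i) + b * i by rewrite -mulnDr; congr (_ * _); lia.
rewrite /S in sc *; lia.
Qed.

Lemma count_one_mem (T : eqType) (P : pred T) (s : seq T) x :
  uniq s -> x \in s -> P x -> (forall y, y \in s -> P y -> y = x) -> count P s = 1.
Proof.
move=> us xs px h.
rewrite (@eq_in_count _ _ (pred1 x)); first by have := count_uniq_mem x us; rewrite xs.
move=> y ys /=; apply/idP/eqP; first exact: h.
by move=> ->.
Qed.

Section Cycle.
Variables (b m : nat).
Hypothesis m0 : 0 < m.
Let S := b * m + 1.
Let X := wcomp m S.

Lemma count_rot_one c : c \in X -> count (fun i => good b (rot i c)) (iota 0 m) = 1.
Proof.
rewrite mem_wcomp => /andP[/eqP sc /eqP smc].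
have smc' : sumn c = b * size c + 1 by rewrite smc sc.
have m0c : 0 < size c by rewrite sc.
have [i hi gi] := rot_exists smc' m0c.
apply: (count_one_mem (x := i)) => //; first exact: iota_uniq.
  by rewrite mem_iota -sc.
move=> j; rewrite mem_iota add0n -sc => hj gj.
exact: (rot_unique smc').
Qed.

Lemma perm_rot_X i : perm_eq (map (rot i) X) X.
Proof.
apply: uniq_perm.
- by rewrite map_inj_uniq ?uniq_wcomp //; exact: rot_inj.
- exact: uniq_wcomp.
move=> c; apply/mapP/idP.
  by case=> d hd ->; move: hd; rewrite !mem_wcomp size_rot sumn_rot.
move=> hc; exists (rotr i c); last by rewrite rotrK.
by move: hc; rewrite !mem_wcomp size_rotr /rotr sumn_rot.
Qed.

Lemma cycle_count : m * count (good b) X = size X.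
Proof.
rewrite -sum1_size.
transitivity (\sum_(c <- X) \sum_(i <- iota 0 m) (if good b (rot i c) then 1 else 0)).
  rewrite exchange_big /=.
  rewrite (eq_bigr (fun _ => count (good b) X)).
    by rewrite big_const_seq count_predT size_iota iter_addn_0 mulnC.
  move=> i _.
  rewrite -big_mkcond sum1_count.
  rewrite -((permP (perm_rot_X i)) (good b)) count_map.
  by apply: eq_count.
apply: eq_big_seq => c hc.
by rewrite -big_mkcond sum1_count count_rot_one.
Qed.

End Cycle.


Local Open Scope fset_scope.

Section Pyr.
Variable a : nat.
Hypothesis a0 : (0 < a)%N.

Local Notation conc := (concurrent a).

Ltac plia :=
  have := a0;
  repeat (match goal with
          | H : is_true ?b |- _ =>
              match b with
              | context [(?p).1] => revert H
              | context [(?p).2] => revert H end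
          | H : ?x = ?y |- _ =>
              match constr:((x, y)) with
              | context [(?p).1] => revert H
              | context [(?p).2] => revert H end
          end);
  repeat (match goal with
          | |- context [(?p).1] => let u := fresh "u" in move: (p.1) => u
          | |- context [(?p).2] => let u := fresh "v" in move: (p.2) => u
          end);
  intros; lia.

Lemma concE s t : conc s t = ((t - a%:Z < s) && (s < t + a%:Z))%R.
Proof.
rewrite /concurrent -ltz_nat abszE ltr_norml.
by apply/idP/idP => /andP[h1 h2]; apply/andP; split; lia.
Qed.

Lemma concC s t : conc s t = conc t s.
Proof. by rewrite /concurrent distnC. Qed.

Lemma conc_refl s : conc s s.
Proof. by rewrite /concurrent subrr. Qed.

Definition dl C s := drop_level a C s.

Lemma dl_gt C s p : p \in C -> conc p.1 s -> (p.2 < dl C s)%N.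
Proof. by move=> pC h; apply: (leq_bigmax_seq (F := fun p : placed => p.2.+1)). Qed.

Lemma dl_le C s h : (forall p, p \in C -> conc p.1 s -> (p.2 < h)%N) -> (dl C s <= h)%N.
Proof. by move=> H; apply/bigmax_leqP_seq => p pC hp; apply: H. Qed.

Lemma dl_wit C s : (0 < dl C s)%N ->
  exists2 p, p \in C & conc p.1 s && (p.2.+1 == dl C s).
Proof.
move=> h.
case: (boolP (has (fun p : placed => conc p.1 s && (p.2.+1 == dl C s)) C)).
  by move/hasP.
move/hasPn => H.
have : (dl C s <= (dl C s).-1)%N.
  apply: dl_le => p pC hp.
  have := dl_gt pC hp; have := H p pC; rewrite hp /= => hne hlt.
  lia.
lia.
Qed.

Lemma dl0 s : dl fset0 s = 0%N.
Proof. by rewrite /dl /drop_level big_nil. Qed.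

Definition dropP C s := (s, dl C s) |` C.
Definition build (w : seq int) := foldl dropP fset0 w.

Lemma build_rcons w x : build (rcons w x) = dropP (build w) x.
Proof. by rewrite /build foldl_rcons. Qed.

Lemma heap_build w : heap a (build w).
Proof.
elim/last_ind: w => [|w x IH]; first exact: heap_empty.
by rewrite build_rcons; apply: heap_drop.
Qed.

Lemma dropP_notin C s : (s, dl C s) \notin C.
Proof.
apply/negP => h; have := dl_gt h (conc_refl s); by rewrite ltnn.
Qed.

Definition valid (C : {fset placed}) :=
  (forall p q, p \in C -> q \in C -> p.2 = q.2 -> conc p.1 q.1 -> p = q) /\
  (forall p, p \in C -> (0 < p.2)%N ->
     exists2 q, q \in C & (q.2.+1 == p.2) && conc q.1 p.1).

Lemma heap_valid C : heap a C -> valid C.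
Proof.
elim => [|C0 s _ [VA VB]].
  by split => [p q|p]; rewrite inE.
split.
  move=> p q; rewrite !in_fset1U => /predU1P[->|pC] /predU1P[->|qC] //= e hc.
  - by move: hc; rewrite concC => /(dl_gt qC); rewrite -e ltnn.
  - by have := dl_gt pC hc; rewrite e ltnn.
  - exact: VA.
move=> p; rewrite in_fset1U => /predU1P[->|pC] /= h.
  have [q qC /andP[hq e]] := dl_wit h.
  by exists q; rewrite ?in_fset1U ?qC ?orbT // e hq.
have [q qC hq] := VB p pC h.
by exists q => //; rewrite in_fset1U qC orbT.
Qed.

Definition maximal (C : {fset placed}) (p : placed) :=
  all (fun q : placed => conc q.1 p.1 ==> (q.2 <= p.2)%N) C.

Lemma maximalP C p :
  reflect (forall q, q \in C -> conc q.1 p.1 -> (q.2 <= p.2)%N) (maximal C p).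
Proof.
apply: (iffP allP) => H q qC; first by move=> hc; have := H q qC; rewrite hc.
by apply/implyP; apply: H.
Qed.

Lemma dropP_maximal C s : maximal (dropP C s) (s, dl C s).
Proof.
apply/maximalP => q; rewrite in_fset1U => /predU1P[->//|qC] /= hc.
exact: ltnW (dl_gt qC hc).
Qed.


Definition vseq (s : seq int) : bool :=
  if s is x :: t then
    [&& x == 0%R, all (fun y => 0 <= y)%R t & path (fun u v => v <= u + a%:Z - 1)%R x t]
  else false.

Lemma vseq_rcons s x : s != [::] ->
  vseq (rcons s x) = [&& vseq s, (0 <= x)%R & (x <= last 0%R s + a%:Z - 1)%R].
Proof.
case: s => // y t _ /=; rewrite all_rcons rcons_path.
by case: (y == 0%R); case: (0 <= x)%R; case: (all _ t); case: (path _ y t);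
  case: (x <= _)%R.
Qed.

Lemma vseq1 x : vseq [:: x] = (x == 0%R).
Proof. by rewrite /= andbT. Qed.

Lemma maximal_sub C C' p : C' `<=` C -> maximal C p -> maximal C' p.
Proof.
move=> sub /maximalP H; apply/maximalP => q qC; apply: H.
exact: (fsubsetP sub).
Qed.

Definition Inv (s : seq int) : Prop :=
 let C := build s in
 [/\ #|` C| = size s,
   (forall p, p \in C -> (0 <= p.1)%R),
   (0%Z, 0%N) \in C /\ (forall p, p \in C -> p.2 = 0%N -> p = (0%Z, 0%N)),
   (forall t, (0 <= t <= last 0%R s)%R -> exists2 q, q \in C & (q.1 <= t < q.1 + a%:Z)%R) &
   exists2 z, z \in C & [/\ z.1 = last 0%R s, maximal C z &
       forall y, y \in C -> maximal C y -> (z.1 <= y.1)%R]].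

Lemma build1 : build [:: 0%R] = [fset (0%Z, 0%N)].
Proof. by rewrite /build /= /dropP dl0 fsetU0. Qed.

Lemma inv_vseq s : vseq s -> Inv s.
Proof.
elim/last_ind: s => [//|s x IH].
case: (eqVneq s [::]) => [->|sne].
  rewrite /= andbT => /eqP ->; rewrite /Inv /= -/(build [:: 0%R]) build1.
  split.
  - by rewrite cardfs1.
  - by move=> p; rewrite inE => /eqP ->.
  - by split => [|p]; rewrite inE // => /eqP ->.
  - move=> t /andP[t0 t1]; exists (0%Z, 0%N); rewrite ?inE //=; plia.
  - exists (0%Z, 0%N); rewrite ?inE //; split => //.
      by apply/maximalP => q; rewrite inE => /eqP ->.
    by move=> y; rewrite inE => /eqP ->.
rewrite vseq_rcons // => /and3P[vs x0 xl].
have [I1 I2 [I3 I3'] I4 [z zC [z1 zm zmin]]] := IH vs.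
rewrite /Inv build_rcons last_rcons size_rcons.
have hn := dropP_notin (build s) x.
have hpos : (0 < dl (build s) x)%N.
  case: (lerP x (last 0%R s)) => hxl.
    have [q qC /andP[q1 q2]] := I4 x (introT andP (conj x0 hxl)).
    apply: leq_ltn_trans (dl_gt qC _) => //.
    by rewrite concE; apply/andP; split; plia.
  apply: leq_ltn_trans (dl_gt zC _) => //.
  by rewrite concE; apply/andP; split; plia.
split.
- by rewrite /dropP cardfsU1 hn I1.
- by move=> p; rewrite /dropP in_fset1U => /predU1P[->//|]; apply: I2.
- split; first by rewrite /dropP in_fset1U I3 orbT.
  move=> p; rewrite /dropP in_fset1U => /predU1P[->/= e|]; last exact: I3'.
  by rewrite e in hpos.
- move=> t /andP[t0 tx].
  case: (lerP t (last 0%R s)) => htl.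
    have [q qC hq] := I4 t (introT andP (conj t0 htl)).
    by exists q => //; rewrite /dropP in_fset1U qC orbT.
  exists z; first by rewrite /dropP in_fset1U zC orbT.
  apply/andP; split; plia.
- exists (x, dl (build s) x); first by rewrite /dropP fset1U1.
  split => //; first exact: dropP_maximal.
  move=> y; rewrite /dropP in_fset1U => /predU1P[->//|yC] ym.
  have ym0 : maximal (build s) y.
    by apply: maximal_sub ym; apply: fsubsetU1.
  have hzy := zmin y yC ym0.
  have nc : ~~ conc y.1 x.
    apply/negP => hc.
    have := (maximalP _ _ ym) (x, dl (build s) x) (fset1U1 _ _).
    rewrite /= concC => /(_ hc).
    by have := dl_gt yC hc; plia.
  move: nc; rewrite concE negb_and -!leNgt /= => nc.
  case/orP: nc; plia.
Qed.


Lemma max_same C p q : maximal C p -> maximal C q -> p \in C -> q \in C -> p.1 = q.1 -> p = q.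
Proof.
move=> /maximalP mp /maximalP mq pC qC e.
have h1 := mp q qC; rewrite e conc_refl in h1.
have h2 := mq p pC; rewrite e conc_refl in h2.
case: p q e h1 h2 {mp mq pC qC} => [p1 p2] [q1 q2] /= -> h1 h2.
by have := h1 isT; have := h2 isT; move=> ha hb; congr (_, _); lia.
Qed.

Lemma vseq_neq0 s : vseq s -> s != [::].
Proof. by case: s. Qed.

Lemma build_inj n s s' : size s = n -> vseq s -> vseq s' -> build s = build s' -> s = s'.
Proof.
elim: n s s' => [|n IH] s s'; first by case: s.
case/lastP: s => [//|s0 x]; case/lastP: s' => [//|s0' x'] hs v v' e.
have [I1 I2 [I3 I3'] I4 [z zC [z1 zm zmin]]] := inv_vseq v.
have [J1 J2 [J3 J3'] J4 [z' zC' [z1' zm' zmin']]] := inv_vseq v'.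
rewrite -e in zC' zm' zmin' J1.
have hs' : size (rcons s0' x') = n.+1 by rewrite -J1 I1.
rewrite last_rcons in z1; rewrite last_rcons in z1'.
have xx : x = x'.
  have := zmin _ zC' zm'; have := zmin' _ zC zm; rewrite z1 z1'.
  by move=> h1 h2; apply: le_anti; rewrite h1 h2.
rewrite -xx in e v' hs'.
have pC : (x, dl (build s0) x) \in build (rcons s0 x) by rewrite build_rcons /dropP fset1U1.
have pm : maximal (build (rcons s0 x)) (x, dl (build s0) x).
  by rewrite build_rcons; apply: dropP_maximal.
have pC' : (x, dl (build s0') x) \in build (rcons s0 x).
  by rewrite e build_rcons /dropP fset1U1.
have pm' : maximal (build (rcons s0 x)) (x, dl (build s0') x).
  by rewrite e build_rcons; apply: dropP_maximal.
have pp : (x, dl (build s0) x) = (x, dl (build s0') x) := max_same pm pm' pC pC' erefl.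
have eb : build s0 = build s0'.
  move: e; rewrite !build_rcons /dropP -pp => e.
  by rewrite -(fsetU1K (dropP_notin (build s0) x)) e fsetU1K // pp dropP_notin.
case: (eqVneq s0 [::]) => [s00|s0n].
  subst s0; have : size s0' = 0%N.
    by move: hs hs'; rewrite !size_rcons /= => -[] <- -[].
  by move/size0nil => ->; rewrite xx.
have s0n' : s0' != [::].
  apply/eqP => s00; move: hs'; rewrite s00 size_rcons /= => h.
  have : size s0 = 0%N by move: hs; rewrite size_rcons -h => -[].
  by move/size0nil; apply/eqP.
move: v v'; rewrite !vseq_rcons // => /and3P[v _ _] /and3P[v' _ _].
have -> : s0 = s0' by apply: IH => //; move: hs; rewrite size_rcons => -[].
by rewrite xx.
Qed.

Lemma seq_argmin (T : eqType) (s : seq T) (P : pred T) (f : T -> nat) :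
  has P s -> exists2 x, x \in s & P x && all (fun y => P y ==> (f x <= f y)%N) s.
Proof.
elim: s => [//|y s IH] /=.
case: (boolP (has P s)) => hs; last first.
  rewrite orbF => py; exists y; rewrite ?inE ?eqxx // py /= leqnn /=.
  by apply/allP => w ws; apply/implyP => pw; move/hasPn: hs => /(_ w ws); rewrite pw.
move=> _; have [x xs /andP[px ax]] := IH hs.
case: (boolP (P y && (f y < f x)%N)) => [/andP[py lt]|hy].
  exists y; rewrite ?inE ?eqxx // py /= leqnn /=.
  apply/allP => w ws; apply/implyP => pw.
  by have := allP ax w ws; rewrite pw /= => h; apply: leq_trans (ltnW lt) h.
exists x; first by rewrite inE xs orbT.
rewrite px /= ax andbT; apply/implyP => py; move: hy; rewrite py /= -leqNgt; done.
Qed.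

Definition RP (C : {fset placed}) :=
  [/\ valid C, (forall p, p \in C -> (0 <= p.1)%R), (0%Z, 0%N) \in C &
      (forall p, p \in C -> p.2 = 0%N -> p = (0%Z, 0%N))].

Lemma desc C : valid C -> forall k q, q \in C -> q.2 = k.+1 -> exists2 r, r \in C & r.2 = 1%N.
Proof.
move=> [_ VB]; elim=> [|k IH] q qC hq; first by exists q.
have q0 : (0 < q.2)%N by rewrite hq.
have [w wC /andP[/eqP hw _]] := VB q qC q0.
by apply: (IH w) => //; rewrite hq in hw; case: hw.
Qed.


Lemma seq_argmax (T : eqType) (s : seq T) (f : T -> nat) :
  s != [::] -> exists2 x, x \in s & all (fun y => (f y <= f x)%N) s.
Proof.
elim: s => [//|y s IH] _ /=.
case: (eqVneq s [::]) => [->|sn].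
  by exists y; rewrite ?inE ?eqxx //= leqnn.
have [x xs ax] := IH sn.
case: (leqP (f y) (f x)) => h.
  by exists x; rewrite ?inE ?xs ?orbT // h.
exists y; rewrite ?inE ?eqxx //= leqnn /=.
by apply/allP => w ws; apply: leq_trans (allP ax w ws) (ltnW h).
Qed.

Lemma arith1 (u v : int) : (u < v + a%:Z)%R -> (v + a%:Z - 1 < u)%R -> False.
Proof. lia. Qed.

Lemma arith2 (u v : int) : (0 <= u)%R -> (0 <= v)%R -> (absz u <= absz v)%N ->
  (v + a%:Z - 1 < u)%R -> False.
Proof. have := a0; lia. Qed.

Lemma build_surj n C : #|` C| = n.+1 -> RP C -> exists2 s, vseq s & build s = C.
Proof.
elim: n C => [|n IH] C hc [V P0 Z0 L0].
  have /cardfs1P [x ex] : #|` C| == 1%N by rewrite hc.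
  move: Z0; rewrite ex inE => /eqP ex0.
  by exists [:: 0%R]; rewrite ?vseq1 // build1 ex0.
have [q qC qn] : exists2 q, q \in C & q != (0%Z, 0%N).
  case: (boolP (has (fun q => q != (0%Z, 0%N)) C)) => [/hasP [q qC qn]|/hasPn H].
    by exists q.
  have : C `<=` [fset (0%Z, 0%N)].
    by apply/fsubsetP => y yC; have := H y yC; rewrite negbK inE.
  by move/fsubset_leq_card; rewrite cardfs1 hc.
have q2 : (0 < q.2)%N.
  rewrite lt0n; apply/negP => /eqP h; by rewrite (L0 q qC h) eqxx in qn.
have [r rC r1] := desc V qC (esym (prednK q2)).
have nm0 : ~~ maximal C (0%Z, 0%N).
  apply/negP => /maximalP H.
  have r0 : (0 < r.2)%N by rewrite r1.
  have [w wC /andP[/eqP hw hwc]] := V.2 r rC r0.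
  rewrite r1 in hw; case: hw => hw.
  have ew := L0 w wC hw; rewrite ew /= concC in hwc.
  by have := H r rC hwc; rewrite r1.
have Cn : (C : seq placed) != [::].
  by apply/eqP => Ce; move: qC; rewrite -[q \in C]/(q \in enum_fset C) Ce.
have [mx mxC amx] := seq_argmax (fun q : placed => q.2) Cn.
have hm : has (maximal C) C.
  apply/hasP; exists mx => //; apply/maximalP => y yC _.
  exact: (allP amx y yC).
have [p pC /andP[pm ap]] := seq_argmin (fun p : placed => absz p.1) hm.
have pn : p != (0%Z, 0%N) by apply: contraNneq nm0 => <-.
have p2 : (0 < p.2)%N.
  rewrite lt0n; apply/negP => /eqP h; by rewrite (L0 p pC h) eqxx in pn.
set C' := C `\ p.
have inC' y : (y \in C') = (y != p) && (y \in C) by rewrite in_fsetD1.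
have RC' : RP C'.
  split.
  - split.
      by move=> y1 y2; rewrite !inC' => /andP[_ h1] /andP[_ h2]; apply: V.1.
    move=> y; rewrite inC' => /andP[yp yC] y0.
    have [w wC /andP[/eqP hw hwc]] := V.2 y yC y0.
    exists w => //; last by rewrite hw eqxx hwc.
    rewrite inC' wC andbT; apply/eqP => ew; rewrite ew in hw hwc.
    have := (maximalP _ _ pm) y yC; rewrite concC => /(_ hwc).
    by rewrite -hw ltnn.
  - by move=> y; rewrite inC' => /andP[_ yC]; apply: P0.
  - by rewrite inC' Z0 andbT eq_sym.
  - by move=> y; rewrite inC' => /andP[_ yC]; apply: L0.
have hc' : #|` C'| = n.+1.
  by have := cardfsD1 p C; rewrite pC hc add1n => -[].
have [s' vs' bs'] := IH C' hc' RC'.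
have [I1 I2 [I3 I3'] I4 [z zC [z1 zm zmin]]] := inv_vseq vs'.
rewrite bs' in zC zm zmin.
have hb : (p.1 <= last 0%R s' + a%:Z - 1)%R.
  case: (lerP p.1 (last 0%R s' + a%:Z - 1)) => // hlt.
  have zmC : maximal C z.
    apply/maximalP => y yC hy.
    case: (eqVneq y p) => [ey|yp].
      move: hy; rewrite ey concE => /andP[_ h]; exfalso.
      rewrite z1 in h; exact: (arith1 h hlt).
    have yC' : y \in C' by rewrite inC' yp yC.
    exact: (maximalP _ _ zm) y yC' hy.
  have zC0 : z \in C by move: zC; rewrite inC' => /andP[].
  have := allP ap z zC0; rewrite zmC /= => hab.
  have := P0 p pC; have := P0 z zC0; rewrite z1 in hab *.
  move=> h1 h2; exfalso; exact: (arith2 h2 h1 hab hlt).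
exists (rcons s' p.1).
  by rewrite vseq_rcons ?vseq_neq0 // vs' P0 // hb.
rewrite build_rcons bs' /dropP.
have hdl : dl C' p.1 = p.2.
  apply/eqP; rewrite eqn_leq; apply/andP; split.
    apply: dl_le => y; rewrite inC' => /andP[yp yC] hy.
    have := (maximalP _ _ pm) y yC hy; rewrite leq_eqVlt => /orP[/eqP e|//].
    by have := V.1 y p yC pC e hy; move/eqP: yp.
  have [w wC /andP[/eqP hw hwc]] := V.2 p pC p2.
  have wC' : w \in C'.
    rewrite inC' wC andbT; apply/eqP => ew; rewrite ew in hw; exact: n_Sn _ (esym hw).
  by rewrite -hw; apply: dl_gt.
have -> : (p.1, dl C' p.1) = p by rewrite hdl; case: (p).
exact: fsetD1K.
Qed.

End Pyr.


Section Bridge.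
Variable a : nat.
Hypothesis a0 : (0 < a)%N.
Local Notation b := a.-1.

Lemma bZ : (b%:Z = a%:Z - 1)%R.
Proof. have := a0; lia. Qed.

Fixpoint toSf (x : int) (c : seq nat) : seq int :=
  match c with
  | [::] => [::]
  | c0 :: c' => x :: toSf (x + b%:Z - c0%:Z)%R c'
  end.

Lemma size_toSf x c : size (toSf x c) = size c.
Proof. by elim: c x => //= c0 c IH x; rewrite IH. Qed.

Lemma toSf_map x c :
  toSf x c = [seq (x + (b * j)%:Z - (Q c j)%:Z)%R | j <- iota 0 (size c)].
Proof.
elim: c x => [//|c0 c IH] x /=.
rewrite /Q take0 /= muln0 addr0 subr0; congr (_ :: _).
rewrite IH -[1%N]/(1 + 0)%N iotaDl -map_comp; apply: eq_map => j /=.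
rewrite /Q /= mulnDr muln1 add0n; lia.
Qed.

Lemma good_toSf c : good b c = all (fun y => 0 <= y)%R (toSf 0 c).
Proof.
rewrite toSf_map all_map /good; apply: eq_all => j /=.
by rewrite add0r subr_ge0 lez_nat.
Qed.

Local Notation R := (fun u v : int => (v <= u + a%:Z - 1)%R).

Lemma path_toSf x y c : (y <= x + a%:Z - 1)%R -> path R x (toSf y c).
Proof.
elim: c x y => [//|c0 c IH] x y hy /=.
rewrite hy /=; apply: IH.
have := bZ; lia.
Qed.

Lemma vseq_toSf c : c != [::] -> good b c -> vseq a (toSf 0 c).
Proof.
case: c => [//|c0 c] _; rewrite good_toSf /= => hall.
rewrite hall /=; apply: path_toSf.
have := bZ; lia.
Qed.

Fixpoint ofS (s : seq int) : seq nat :=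
  match s with
  | [::] => [::]
  | [:: x] => [:: absz (x + a%:Z)%R]
  | x :: ((y :: _) as t) => absz (x + b%:Z - y)%R :: ofS t
  end.

Lemma size_ofS s : size (ofS s) = size s.
Proof. elim: s => [//|x [//|y t] IH] /=; by rewrite IH. Qed.

Lemma toSf_ofS x t : path R x t -> toSf x (ofS (x :: t)) = x :: t.
Proof.
elim: t x => [//|y t IH] x /= /andP[hy hp].
congr (_ :: _).
have -> : (x + b%:Z - (absz (x + b%:Z - y)%R)%:Z = y)%R.
  have := bZ; lia.
exact: IH.
Qed.

Lemma sumn_ofS x t : (0 <= x)%R -> all (fun y => 0 <= y)%R t -> path R x t ->
  ((sumn (ofS (x :: t)))%:Z = x + (b * (size t).+1)%:Z + 1)%R.
Proof.
elim: t x => [|y t IH] x hx.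
  move=> _ _ /=; have := bZ; lia.
move=> /andP[hy ht] /andP[hxy hp].
have hu := IH y hy ht hp.
have -> : ofS (x :: y :: t) = absz (x + b%:Z - y)%R :: ofS (y :: t) by [].
rewrite [sumn (_ :: _)]/= PoszD hu [size _]/= mulnS !PoszD.
rewrite [size (_ :: _)]/= mulnS !PoszD; have := bZ; lia.
Qed.

Lemma toSf_head x c : c != [::] -> head 0%R (toSf x c) = x.
Proof. by case: c. Qed.

Lemma toSf_inj x c c' : size c = size c' -> sumn c = sumn c' ->
  toSf x c = toSf x c' -> c = c'.
Proof.
elim: c x c' => [|c0 c IH] x [|c0' c'] //= [hs] hsum [e].
case: (eqVneq c [::]) => [c00|cn].
  subst c; case: c' hs hsum e => //= _ hsum _.
  by rewrite !addn0 in hsum; rewrite hsum.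
have cn' : c' != [::] by apply/eqP => ce; rewrite ce in hs; move/size0nil: hs => hc; by rewrite hc in cn.
have := toSf_head (x + b%:Z - c0%:Z)%R cn; rewrite e toSf_head // => h.
have h0 : c0 = c0' by lia.
subst c0'; congr (_ :: _); apply: (IH (x + b%:Z - c0%:Z)%R) => //.
lia.
Qed.


Definition Sl (m : nat) : seq (seq int) := map (toSf 0) (filter (good b) (wcomp m (b * m + 1))).

Lemma mem_Sl m s : (0 < m)%N -> (s \in Sl m) = vseq a s && (size s == m).
Proof.
move=> m0; apply/mapP/andP.
  case=> c; rewrite mem_filter mem_wcomp => /andP[g /andP[/eqP sc /eqP smc]] ->.
  split; last by rewrite size_toSf sc.
  apply: vseq_toSf => //; apply/eqP => c0; by rewrite c0 in sc; rewrite -sc in m0.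
case: s => [[//]|x t] [v /eqP sz].
have /and3P[/eqP x0 ht hp] := v; subst x.
exists (ofS (0%R :: t)); last by rewrite toSf_ofS.
rewrite mem_filter mem_wcomp size_ofS sz eqxx andTb.
have hs := sumn_ofS (lexx 0%R) ht hp.
apply/andP; split; first by rewrite good_toSf toSf_ofS //= ht.
have sz' : (size t).+1 = m := sz; rewrite -sz'; apply/eqP; move: hs; rewrite add0r; move: (sumn _) (b * _)%N => u0 v0 h; lia.
Qed.

Lemma uniq_Sl m : uniq (Sl m).
Proof.
rewrite map_inj_in_uniq ?filter_uniq ?uniq_wcomp //.
move=> c c'; rewrite !mem_filter !mem_wcomp => /andP[_ /andP[/eqP s1 /eqP t1]]
  /andP[_ /andP[/eqP s2 /eqP t2]] e.
by apply: (toSf_inj (x := 0%R)) => //; rewrite ?s1 ?s2 ?t1 ?t2.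
Qed.

Lemma size_Sl m : (0 < m)%N -> m * size (Sl m) = 'C(a * m, b * m + 1).
Proof.
move=> m0; rewrite size_map size_filter cycle_count // size_wcomp.
congr 'C(_, _).
have ha : a = b.+1 by have := a0; lia.
rewrite {2}ha mulSn; lia.
Qed.

End Bridge.


Lemma fuss_arith a m G : (0 < a)%N -> (0 < m)%N -> (m * G = 'C(a * m, a.-1 * m + 1))%N ->
  G = ('C(a * m, m) %/ ((a - 1) * m + 1))%N /\
  G = ((a * m)`! %/ (m`! * ((a - 1) * m + 1)`!))%N.
Proof.
move=> a0 m0; rewrite -subn1 => hG.
set N := (a * m)%N; set k := ((a - 1) * m + 1)%N.
have eN : N = ((a - 1) * m + m)%N.
  rewrite /N -{1}(subnK a0) mulnDl mul1n; lia.
have kN : (k <= N)%N by rewrite /k eN; move: ((a - 1) * m)%N => t; lia.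
have Nk : (N - k = m.-1)%N by rewrite /k eN; move: ((a - 1) * m)%N => t; lia.
have h1 := bin_fact kN; rewrite Nk -hG in h1.
have fm : m`! = (m * m.-1`!)%N by rewrite -{1}(prednK m0) factS prednK.
have e1 : (G * (m`! * k`!) = N`!)%N by rewrite -h1 fm; ring.
split; last by rewrite -e1 mulnK // muln_gt0 !fact_gt0.
have mN : (m <= N)%N by rewrite eN; move: ((a - 1) * m)%N => t; lia.
have h2 := bin_fact mN.
have Nm : (N - m = (a - 1) * m)%N by rewrite eN; move: ((a - 1) * m)%N => t; lia.
have fk : k`! = (k * ((a - 1) * m)`!)%N by rewrite /k addn1 factS.
rewrite Nm in h2.
have e2 : (G * k = 'C(N, m))%N.
  apply/eqP; rewrite -(eqn_pmul2r (_ : 0 < m`! * ((a - 1) * m)`!)%N); last first.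
    by rewrite muln_gt0 !fact_gt0.
  apply/eqP; rewrite h2 -e1 fk; ring.
by rewrite -e2 mulnK // /k addn1.
Qed.

Theorem corollary1 (a m : nat) (ha : (3 <= a)%N) (hm : (1 <= m)%N) :
  exists L : seq {fset placed},
    [/\ uniq L,
        (forall C : {fset placed}, C \in L <-> (right0_pyramid a C /\ #|` C| = m)),
        size L = ('C(a * m, m) %/ ((a - 1) * m + 1))%N
      & size L = ((a * m)`! %/ (m`! * ((a - 1) * m + 1)`!))%N].
Proof.
have a0 : (0 < a)%N by lia.
exists (map (build a) (Sl a m)).
have memS s : (s \in Sl a m) = vseq a s && (size s == m) := mem_Sl a0 s hm.
have [e1 e2] := fuss_arith a0 hm (size_Sl a0 hm).
rewrite size_map; split => //.
  rewrite map_inj_in_uniq ?uniq_Sl // => s s' hs hs' e.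
  move: hs hs'; rewrite !memS => /andP[v /eqP sz] /andP[v' _].
  exact: (@build_inj a a0 m s s' sz v v' e).
move=> C; split.
  case/mapP => s hs ->; move: hs; rewrite memS => /andP[v /eqP sz].
  have [I1 I2 [I3 I3'] _ _] := inv_vseq a0 v.
  split; last by rewrite I1.
  split; last by split.
  split; first exact: heap_build.
  have -> : [fset p in build a s | p.2 == 0%N] = [fset (0%Z, 0%N)].
    apply/fsetP => p; rewrite !inE; apply/andP/eqP => [[pC /eqP p0]|->].
      exact: I3'.
    by split.
  by rewrite cardfs1.
move=> [[[hp hcard] [hz hpos]] hsz].
have RPC : RP a C.
  split => //; first exact: heap_valid.
  move=> p pC p0.
  have /cardfs1P [x ex] : #|` [fset p in C | p.2 == 0%N]| == 1%N by rewrite hcard.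
  have : (0%Z, 0%N) \in [fset p in C | p.2 == 0%N] by rewrite !inE hz.
  have : p \in [fset p in C | p.2 == 0%N] by rewrite !inE pC p0.
  by rewrite ex !inE => /eqP -> /eqP ->.
have hsz' : #|` C| = m.-1.+1 by rewrite prednK.
have [s v bs] := build_surj a0 hsz' RPC.
apply/mapP; exists s => //; rewrite memS v /=.
have [I1 _ _ _ _] := inv_vseq a0 v.
by rewrite -I1 bs hsz.
Qed.
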